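(* Let $G=Z_{2^{\lambda_1}}\times\cdots\times Z_{2^{\lambda_n}}$ with $\lambda_1\le\cdots\le\lambda_n$. Then $G$ has an irregular characteristic subgroup if and only if there exist indices $i<j$ with $\lambda_j-\lambda_i\ge 2$ such that neither of the factors $Z_{2^{\lambda_i}}$ nor $Z_{2^{\lambda_j}}$ occurs repeated in this decomposition of $G$ (i.e. $\lambda_i$ and $\lambda_j$ each occur exactly once among $\lambda_1,\dots,\lambda_n$).
   Context: Tuples are ordered componentwise; for $\mathbf a$ with $\mathbf 0\le\mathbf a\le(\lambda_1,\dots,\lambda_n)$, $T(\mathbf a)$ is the set of $(g_1,\dots,g_n)\in G$ with $|g_i|=2^{a_i}$ for all $i$, and $R(\mathbf a)=\bigcup_{\mathbf b\le\mathbf a}T(\mathbf b)$. A subgroup is regular if it equals $R(\mathbf a)$ for some such $\mathbf a$, and irregular otherwise. *)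

(* Defs.v *)
From mathcomp Require Import all_boot all_order all_algebra all_fingroup all_solvable.
Set Implicit Arguments. Unset Strict Implicit. Unset Printing Implicit Defensive.
Import GRing.Theory FinRing.Theory.

(* The abelian 2-group G = Z_{2^lam_0} x ... x Z_{2^lam_(n-1)} is realised
   concretely inside the ambient finite abelian group
   amb = ('Z_(2^M))^n  (row vectors, group law = addition), M = max lam_i:
   the i-th coordinate of G is the unique subgroup of 'Z_(2^M) of order
   2^lam_i, i.e. the elements whose order divides 2^lam_i. *)

Definition lmax n (lam : 'I_n -> nat) : nat := \max_(i < n) lam i.

Definition amb n (lam : 'I_n -> nat) : finGroupType :=
  'rV['Z_(2 ^ lmax lam)]_n.

Definition coord n (lam : 'I_n -> nat) (g : amb lam) (i : 'I_n) : 'Z_(2 ^ lmax lam) :=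
  g ord0 i.

Definition Gset n (lam : 'I_n -> nat) : {set amb lam} :=
  [set g : amb lam | [forall i, #[coord g i]%g %| 2 ^ lam i]].

Lemma Gset_group_set n (lam : 'I_n -> nat) : group_set (Gset lam).
Proof.
apply/andP; split.
  rewrite inE; apply/forallP=> i.
  by rewrite /coord order_dvdn zmodXgE mxE mul0rn zmod1gE.
apply/subsetP=> z /imset2P[x y]; rewrite !inE => /forallP Hx /forallP Hy ->.
apply/forallP=> i; move: (Hx i) (Hy i).
rewrite /coord !order_dvdn !zmodXgE zmodMgE !zmod1gE mxE mulrnDl.
by move=> /eqP -> /eqP ->; rewrite addr0.
Qed.

Canonical Ggroup n (lam : 'I_n -> nat) : {group amb lam} :=
  Group (Gset_group_set lam).

Definition Tset n (lam : 'I_n -> nat) (a : 'I_n -> nat) : {set amb lam} :=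
  [set g in Gset lam | [forall i, #[coord g i]%g == 2 ^ a i]].

(* R(a) = union of the T(b) over 0 <= b <= a (componentwise); since
   a <= lam <= lmax lam, all such b take values in 'I_(lmax lam).+1. *)
Definition Rset n (lam : 'I_n -> nat) (a : 'I_n -> nat) : {set amb lam} :=
  \bigcup_(b : {ffun 'I_n -> 'I_(lmax lam).+1} | [forall i, (b i : nat) <= a i])
     Tset lam (fun i => b i).

Definition regular n (lam : 'I_n -> nat) (H : {set amb lam}) : Prop :=
  exists a : 'I_n -> nat, (forall i, a i <= lam i) /\ H = Rset lam a.

(* Main.v *)
Require Import Defs.
From mathcomp Require Import all_boot all_order all_algebra all_fingroup all_solvable.
From mathcomp Require Import zify.
From Stdlib Require Import Lia Classical.
Import GRing.Theory FinRing.Theory.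
Set Implicit Arguments. Unset Strict Implicit. Unset Printing Implicit Defensive.

Section Main.
Variables (n : nat) (lam : 'I_n -> nat).
Local Notation M := (lmax lam).
Local Notation Z := ('Z_(2 ^ lmax lam)).
Local Notation A := (amb lam).

Lemma lam_le k : lam k <= M.
Proof. exact: (leq_bigmax (F := lam) k). Qed.

Section Pos.
Hypothesis HM : 0 < M.

Lemma N_gt1 : 1 < 2 ^ M.
Proof. by rewrite -{1}(expn0 2) ltn_exp2l. Qed.

Lemma ZN : (Zp_trunc (2 ^ M)).+2 = 2 ^ M.
Proof. exact: Zp_cast N_gt1. Qed.

Lemma valD (x y : Z) : nat_of_ord (x + y)%R = (nat_of_ord x + nat_of_ord y) %% 2 ^ M.
Proof.
transitivity ((nat_of_ord x + nat_of_ord y) %% (Zp_trunc (2 ^ M)).+2); first by [].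
by congr (_ %% _); exact: ZN.
Qed.

Lemma valMn (x : Z) m : nat_of_ord (x *+ m)%R = (nat_of_ord x * m) %% 2 ^ M.
Proof.
rewrite -[x in LHS]natr_Zp -mulrnA.
by rewrite val_Zp_nat ?N_gt1.
Qed.

Lemma val_lt (x : Z) : nat_of_ord x < 2 ^ M.
Proof. have := ltn_ord x; move: (nat_of_ord x) => v; by rewrite ZN. Qed.

Lemma val0 : nat_of_ord (0 : Z)%R = 0.
Proof. by []. Qed.

Lemma ordE (x : Z) s : s <= M -> (#[x]%g %| 2 ^ s) = (2 ^ (M - s) %| nat_of_ord x).
Proof.
move=> sM; rewrite order_dvdn zmodXgE zmod1gE.
rewrite -val_eqE /= valMn. rewrite -/(dvdn _ _).
by rewrite -{1}(subnK sM) expnD dvdn_pmul2r ?expn_gt0.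
Qed.

Lemma ord_pow (x : Z) : exists2 t, t <= M & #[x]%g = 2 ^ t.
Proof.
apply/dvdn_pfactor => //.
have := order_dvdG (in_setT x); rewrite cardsT card_ord ZN //.
Qed.

End Pos.

Hypothesis lam_pos : forall i, 0 < lam i.

Lemma M_pos (k : 'I_n) : 0 < M.
Proof. exact: leq_trans (lam_pos k) (lam_le k). Qed.

Lemma inG (g : A) : (g \in Ggroup lam) = [forall i, #[g ord0 i]%g %| 2 ^ lam i].
Proof. by rewrite inE. Qed.

Lemma ord_addn (x y : Z) s : #[x]%g %| 2 ^ s -> #[y]%g %| 2 ^ s -> #[(x + y)%R]%g %| 2 ^ s.
Proof.
rewrite !order_dvdn !zmodXgE !zmod1gE mulrnDl => /eqP -> /eqP ->.
by rewrite addr0.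
Qed.

Lemma inRset (a : 'I_n -> nat) (g : A) : (forall i, a i <= lam i) ->
  (g \in Rset lam a) = [forall k, #[g ord0 k]%g %| 2 ^ a k].
Proof.
move=> alam; apply/bigcupP/forallP.
  case=> b /forallP Hb; rewrite inE => /andP [_ /forallP Hg] k.
  by rewrite /coord in Hg; rewrite (eqP (Hg k)) dvdn_Pexp2l.
move=> Hg.
have ordk k : #[g ord0 k]%g = 2 ^ logn 2 #[g ord0 k]%g /\ logn 2 #[g ord0 k]%g <= M.
  have [t tM ->] := ord_pow (M_pos k) (g ord0 k).
  by rewrite pfactorK.
exists [ffun k => (inord (logn 2 #[g ord0 k]%g) : 'I_M.+1)].
  apply/forallP => k; rewrite ffunE inordK; last by rewrite ltnS; case: (ordk k).
  by move: (Hg k); case: (ordk k) => E _; rewrite {1}E dvdn_Pexp2l.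
rewrite inE; apply/andP; split.
  rewrite inE; apply/forallP => k; rewrite /coord.
  by apply: dvdn_trans (Hg k) _; rewrite dvdn_Pexp2l.
apply/forallP => k; rewrite /coord ffunE inordK; last by rewrite ltnS; case: (ordk k).
by case: (ordk k) => E _; rewrite {1}E.
Qed.

Definition restr (S : {set 'I_n}) (g : A) : A :=
  (\row_j (if j \in S then g ord0 j else 0))%R.

Lemma restr_in (H : {group A}) (S : {set 'I_n}) (g : A) :
  (forall k, k \in S -> restr [set k] g \in H) -> restr S g \in H.
Proof.
move=> Hk.
have -> : restr S g = (\prod_(k in S) restr [set k] g)%g.
  apply/rowP => j.
  rewrite (big_morph (fun B : A => B ord0 j) (id1 := 0%R) (op1 := +%R)); first last.
  - by rewrite zmod1gE mxE.
  - by move=> x y; rewrite zmodMgE mxE.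
  rewrite mxE; case: (boolP (j \in S)) => jS.
    rewrite (bigD1 j) //= mxE set11 big1 ?addr0 // => i /andP [_ ij].
    by rewrite mxE in_set1 eq_sym (negbTE ij).
  rewrite big1 // => i iS; rewrite mxE in_set1; case: eqP => // ji.
  by move: jS; rewrite ji iS.
exact: group_prod.
Qed.

Lemma restr_split (S : {set 'I_n}) (g : A) : (restr S g * restr (~: S) g)%g = g.
Proof.
apply/rowP => j; rewrite zmodMgE !mxE inE.
by case: (j \in S); rewrite ?addr0 ?add0r.
Qed.

Lemma restrC_in (H : {group A}) (S : {set 'I_n}) (g : A) :
  g \in H -> restr S g \in H -> restr (~: S) g \in H.
Proof.
move=> gH rH; have := groupM (groupVr rH) gH.
by rewrite -{2}(restr_split S g) mulKg.
Qed.

Definition psi (k l : 'I_n) m (g : A) : A :=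
  (\row_j (if j == l then g ord0 k *+ m else 0))%R.

Definition tr k l m (g : A) : A := (g + psi k l m g)%R.

Lemma tr_morphM k l m : {in Ggroup lam &, {morph tr k l m : x y / (x * y)%g >-> (x * y)%g}}.
Proof.
move=> x y _ _; rewrite !zmodMgE /tr; apply/rowP => j; rewrite !mxE.
case: (j == l); rewrite ?mulrnDl; [rewrite addrACA // | by rewrite !addr0].
Qed.

Definition trm k l m : {morphism Ggroup lam >-> A} := Morphism (tr_morphM k l m).

Lemma psi_psi k l m (g : A) : k != l -> psi k l m (psi k l m g) = 0%R.
Proof.
move=> kl; apply/rowP => j; rewrite !mxE (negbTE kl).
by case: (j == l); rewrite ?mul0rn.
Qed.

Lemma psi_add k l m (x y : A) : psi k l m (x + y)%R = (psi k l m x + psi k l m y)%R.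
Proof. apply/rowP => j; rewrite !mxE; case: (j == l); rewrite ?mulrnDl ?addr0 //. Qed.

Section Trans.
Variables (k l : 'I_n) (m : nat).
Hypothesis kl : k != l.
Hypothesis Hm : forall x : Z, #[x]%g %| 2 ^ lam k -> #[(x *+ m)%R]%g %| 2 ^ lam l.

Lemma injm_trm : ('injm (trm k l m))%g.
Proof.
apply/injmP => x y _ _ /= E.
have : psi k l m (tr k l m x) = psi k l m (tr k l m y) by rewrite E.
rewrite /tr !psi_add !psi_psi // !addr0 => E2.
by move: E; rewrite /tr E2 => /addIr.
Qed.

Lemma tr_in (g : A) : g \in Ggroup lam -> tr k l m g \in Ggroup lam.
Proof.
rewrite !inG => /forallP Hg; apply/forallP => j; rewrite /tr !mxE.
case: eqP => [-> | _]; last by rewrite addr0.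
exact: ord_addn (Hg l) (Hm (Hg k)).
Qed.

Lemma im_trm : (trm k l m @* Ggroup lam)%g = Ggroup lam.
Proof.
apply/eqP; rewrite eqEcard card_injm ?injm_trm // leqnn andbT.
apply/subsetP => y /morphimP [x _ xG ->] /=; exact: tr_in.
Qed.

Lemma psi_char (H : {group A}) (h : A) :
  (H \char Ggroup lam)%g -> h \in H -> psi k l m h \in H.
Proof.
case/charP => HG Hf hH.
have hG : h \in Ggroup lam by apply: (subsetP HG).
have : trm k l m h \in H by rewrite -(Hf _ injm_trm im_trm) mem_morphim.
move=> /(groupM (groupVr hH)); rewrite /= /tr zmodMgE zmodVgE.
by rewrite addKr.
Qed.
End Trans.

Lemma mult_of (x y : Z) : #[y]%g %| #[x]%g -> exists m, y = (x *+ m)%R.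
Proof.
move=> yx.
have genZ : <[Zp1 : Z]>%g = [set: Z] by rewrite -Zp_cycle.
have d1 : #[y]%g %| #[Zp1 : Z]%g.
  by rewrite /order genZ; exact: order_dvdG (in_setT y).
have := cycle_sub_group d1; have := cycle_sub_group yx.
set K := <[(x ^+ (#[x] %/ #[y]))%g]>%G => E1 E2.
have : K \in [set K0 : {group Z} | K0 \subset <[x]>%g & #|K0| == #[y]%g] by rewrite E1 set11.
rewrite inE => /andP [Kx /eqP cK].
have : K \in [set K0 : {group Z} | K0 \subset <[Zp1 : Z]>%g & #|K0| == #[y]%g].
  by rewrite inE cK eqxx genZ subsetT.
have : <[y]>%G \in [set K0 : {group Z} | K0 \subset <[Zp1 : Z]>%g & #|K0| == #[y]%g].
  by rewrite inE eqxx genZ subsetT.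
rewrite E2 !in_set1 => /eqP Ey /eqP EK.
have : y \in <[x]>%g.
  apply: (subsetP Kx); have -> : gval K = gval <[y]>%G by rewrite EK Ey.
  exact: cycle_id.
by case/cycleP => i ->; exists i; rewrite zmodXgE.
Qed.

Section Pos2.
Hypothesis HM : 0 < M.

Lemma ord_le (a b : Z) : ~~ (#[a]%g %| #[(b *+ 2)%R]%g) -> #[b]%g %| #[a]%g.
Proof.
have [a' _ ->] := ord_pow HM a; have [b' _ Eb] := ord_pow HM (b *+ 2)%R.
rewrite Eb dvdn_Pexp2l // -ltnNge => ba.
apply: (@dvdn_trans (2 ^ b'.+1)); last by rewrite dvdn_Pexp2l.
rewrite order_dvdn zmodXgE expnS mulrnA -zmodXgE -Eb expg_order.
by rewrite zmod1gE.
Qed.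
Lemma supp2 (p q : 'I_n) (x : A) : p != q ->
  (forall r, r != p -> r != q -> x ord0 r = 0%R) ->
  restr [set q] x = (x * (restr [set p] x)^-1)%g.
Proof.
move=> pq supp; apply/rowP => j; rewrite zmodMgE zmodVgE !mxE !in_set1.
case: (eqVneq j q) => [-> | jq].
  by rewrite eq_sym (negbTE pq) oppr0 addr0.
case: (eqVneq j p) => [-> | jp]; first by rewrite subrr.
by rewrite supp // oppr0 addr0.
Qed.

Lemma two_coord (H : {group A}) (p q : 'I_n) (x : A) :
  (H \char Ggroup lam)%g -> p != q -> lam q = (lam p).+1 -> x \in H ->
  (forall r, r != p -> r != q -> x ord0 r = 0%R) ->
  restr [set p] x \in H /\ restr [set q] x \in H.
Proof.
move=> Hc pq Hpq xH supp.
suff P : restr [set p] x \in H by split => //; rewrite (supp2 pq supp) groupM ?groupV.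
have AH : psi q p 2 x \in H.
  apply: psi_char => //; first by rewrite eq_sym.
  move=> z; rewrite !order_dvdn !zmodXgE -mulrnA -expnS -Hpq.
  by rewrite -!zmodXgE.
have BH : psi p q 1 x \in H.
  apply: psi_char => // z zp; rewrite mulr1n; apply: dvdn_trans zp _.
  by rewrite dvdn_Pexp2l // Hpq.
case: (boolP (#[x ord0 p]%g %| #[(x ord0 q *+ 2)%R]%g)) => [/mult_of [m0 Em] | /ord_le].
  have -> : restr [set p] x = (psi q p 2 x ^+ m0)%g.
    apply/rowP => j; rewrite zmodXgE mulmxnE !mxE in_set1.
    by case: eqP => [-> | _]; rewrite ?mul0rn.
  exact: groupX.
move=> /mult_of [m0 Em].
have QH : restr [set q] x \in H.
  have -> : restr [set q] x = (psi p q 1 x ^+ m0)%g.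
    apply/rowP => j; rewrite zmodXgE mulmxnE !mxE in_set1.
    by case: eqP => [-> | _]; rewrite ?mul0rn ?mulr1n.
  exact: groupX.
have supp' : forall r, r != q -> r != p -> x ord0 r = 0%R by move=> r rq rp; apply: supp.
rewrite (supp2 (p:=q) (q:=p) _ supp') ?groupM ?groupV //; by rewrite eq_sym.
Qed.
End Pos2.

Hypothesis lam_sorted : forall i j : 'I_n, i <= j -> lam i <= lam j.

Definition bad := exists i j : 'I_n, [/\ i < j, lam i + 2 <= lam j,
       (forall k : 'I_n, lam k = lam i -> k = i) &
       (forall k : 'I_n, lam k = lam j -> k = j)].

Definition Rep := [set r : 'I_n | ~~ [forall l, (lam l == lam r) ==> (l == r)]].

Lemma uniqR r : r \notin Rep -> forall l, lam l = lam r -> l = r.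
Proof.
rewrite inE negbK => /forallP U l E.
by have := U l; rewrite E eqxx => /eqP.
Qed.

Lemma badP u v : u \notin Rep -> v \notin Rep -> lam u + 2 <= lam v -> bad.
Proof.
move=> uR vR uv; exists u, v; split => //; last by apply: uniqR.
  rewrite ltnNge; apply/negP => /lam_sorted; lia.
by apply: uniqR.
Qed.

Lemma proj_in (H : {group A}) (h : A) (k : 'I_n) :
  (H \char Ggroup lam)%g -> ~ bad -> h \in H -> restr [set k] h \in H.
Proof.
move=> Hc nb hH.
have rep r : r \in Rep -> restr [set r] h \in H.
  rewrite inE negb_forall => /existsP [l]; rewrite negb_imply => /andP [/eqP Elr lr].
  have Hm1 : forall u v : 'I_n, lam u = lam v -> forall z : Z,
      #[z]%g %| 2 ^ lam u -> #[(z *+ 1)%R]%g %| 2 ^ lam v.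
    by move=> u v E z; rewrite mulr1n E.
  have h1 : psi r l 1 h \in H by apply: psi_char => //; [rewrite eq_sym | apply: Hm1].
  have h2 : psi l r 1 (psi r l 1 h) \in H by apply: psi_char => //; apply: Hm1.
  suff -> : restr [set r] h = psi l r 1 (psi r l 1 h) by [].
  apply/rowP => j; rewrite !mxE in_set1 eqxx.
  by case: eqP => [-> | _]; rewrite ?mulr1n.
have xH : restr (~: Rep) h \in H by apply: restrC_in => //; apply: restr_in.
case: (boolP (k \in Rep)) => kR; first exact: rep.
set x := restr (~: Rep) h in xH.
have Ek : restr [set k] x = restr [set k] h.
  apply/rowP => j; rewrite !mxE in_set1; case: eqP => [-> | //].
  by rewrite inE kR.
rewrite -Ek.
have HM : 0 < M by apply: M_pos k.
have close u v : u \notin Rep -> v \notin Rep -> lam u <= (lam v).+1.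
  move=> uR vR; rewrite leqNgt; apply/negP => vu; apply: nb; apply: (badP vR uR); lia.
case: (pickP [pred q | (q \notin Rep) && (q != k)]) => [q /andP [qR qk] | none].
  have nqk : lam q <> lam k by move=> E; move: qk; rewrite (uniqR kR E) eqxx.
  have supp : forall r, r != k -> r != q -> x ord0 r = 0%R.
    move=> r rk rq; rewrite /x mxE inE; case: (boolP (r \in Rep)) => //= rR.
    have nrk : lam r <> lam k by move=> E; move: rk; rewrite (uniqR kR E) eqxx.
    have nrq : lam r <> lam q by move=> E; move: rq; rewrite (uniqR qR E) eqxx.
    have := close r k rR kR; have := close k r kR rR; have := close r q rR qR.
    have := close q r qR rR; have := close q k qR kR; have := close k q kR qR.
    lia.
  case: (ltngtP (lam q) (lam k)) => cmp.
  - have E : lam k = (lam q).+1 by have := close k q kR qR; lia.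
    have supp' : forall r, r != q -> r != k -> x ord0 r = 0%R by move=> r ? ?; apply: supp.
    by case: (two_coord HM Hc _ E xH supp'); rewrite // eq_sym.
  - have E : lam q = (lam k).+1 by have := close q k qR kR; lia.
    by case: (two_coord HM Hc _ E xH supp); rewrite // eq_sym.
  - by case: nqk.
suff -> : restr [set k] x = x by [].
apply/rowP => j; rewrite !mxE in_set1 inE; case: eqP => [-> | /eqP jk]; first by rewrite kR.
case: (boolP (j \in Rep)) => //= jR.
by have := none j; rewrite /= jR jk.
Qed.

Lemma restrT (g : A) : restr [set: 'I_n] g = g.
Proof. by apply/rowP => j; rewrite mxE inE. Qed.

Lemma nobad_regular (H : {group A}) :
  ~ bad -> (H \char Ggroup lam)%g -> regular (H : {set A}).
Proof.
move=> nb Hc.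
have HG : H \subset Ggroup lam by case/charP: Hc.
pose a k := \max_(h in H) logn 2 #[h ord0 k]%g.
have ordE2 (g : A) k : g \in Ggroup lam ->
    #[g ord0 k]%g = 2 ^ logn 2 #[g ord0 k]%g /\ logn 2 #[g ord0 k]%g <= lam k.
  rewrite inG => /forallP /(_ k) /dvdn_pfactor [//|t tl ->].
  by rewrite pfactorK.
have alam k : a k <= lam k.
  apply/bigmax_leqP => h hH.
  by case: (ordE2 h k (subsetP HG h hH)).
exists a; split => //; apply/setP => g; rewrite inRset //.
apply/idP/forallP.
  move=> gH k; case: (ordE2 g k (subsetP HG g gH)) => -> _.
  by rewrite dvdn_Pexp2l //; apply: (leq_bigmax_cond (F := fun h : A => logn 2 #[h ord0 k]%g)).
move=> Hg; rewrite -(restrT g); apply: restr_in => k _.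
have [h hH Eh] := eq_bigmax_cond (fun h : A => logn 2 #[h ord0 k]%g) (cardG_gt0 H).
have pH := proj_in k Hc nb hH.
have : #[g ord0 k]%g %| #[h ord0 k]%g.
  case: (ordE2 h k (subsetP HG h hH)) => -> _.
  by rewrite -Eh; apply: Hg.
case/mult_of => m0 Em.
have -> : restr [set k] g = ((restr [set k] h) ^+ m0)%g.
  apply/rowP => j; rewrite zmodXgE mulmxnE !mxE in_set1.
  by case: eqP => [-> // | _]; rewrite mul0rn.
exact: groupX.
Qed.

Definition eg (k : 'I_n) : A :=
  (\row_r (if r == k then (2 ^ (M - lam k))%:R else 0))%R.

Lemma ord0_dvd (m : nat) : #[(0 : Z)%R]%g %| m.
Proof. by rewrite order_dvdn zmodXgE mul0rn zmod1gE. Qed.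

Lemma ordMn (z : Z) t s : (#[(z *+ 2 ^ t)%R]%g %| 2 ^ s) = (#[z]%g %| 2 ^ (t + s)).
Proof. by rewrite !order_dvdn !zmodXgE -mulrnA expnD. Qed.

Lemma ordek (k : 'I_n) s : s <= M ->
  (#[((2 ^ (M - lam k))%:R : Z)%R]%g %| 2 ^ s) = (lam k <= s).
Proof.
move=> sM; have HM := M_pos k.
rewrite ordE // val_Zp_nat ?N_gt1 // modn_small; last first.
  rewrite ltn_exp2l //; have := lam_pos k; have := lam_le k; lia.
rewrite dvdn_Pexp2l //; have := lam_le k => ?; apply/idP/idP; lia.
Qed.

Lemma eg_in k : eg k \in Ggroup lam.
Proof.
rewrite inG; apply/forallP => r; rewrite mxE.
case: eqP => [-> | _]; last exact: ord0_dvd.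
by rewrite ordek ?lam_le.
Qed.

Lemma entry_pow (x : A) m r : ((x ^+ m)%g) ord0 r = (x ord0 r *+ m)%R.
Proof. by rewrite zmodXgE mulmxnE. Qed.

Lemma entry_one r : (1%g : A) ord0 r = 0%R.
Proof. by rewrite zmod1gE mxE. Qed.

Lemma entry_mul (x y : A) r : ((x * y)%g) ord0 r = (x ord0 r + y ord0 r)%R.
Proof. by rewrite zmodMgE mxE. Qed.

Lemma pow_one (x : A) m : (forall r, #[x ord0 r]%g %| m) -> (x ^+ m)%g = 1%g.
Proof.
move=> H; apply/rowP => r; rewrite entry_pow entry_one.
by have := H r; rewrite order_dvdn zmodXgE zmod1gE => /eqP.
Qed.

Lemma diag_unit (k : 'I_n) (Uk : forall l, lam l = lam k -> l = k)
  (f : {morphism Ggroup lam >-> A}) :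
  ('injm f)%g -> (f @* Ggroup lam)%g = Ggroup lam ->
  ~~ (#[f (eg k) ord0 k]%g %| 2 ^ (lam k).-1).
Proof.
move=> injf imf; apply/negP => D.
have HM := M_pos k.
set a := lam k in D Uk.
have a1 : 0 < a := lam_pos k.
have aM : a <= M := lam_le k.
have ekG := eg_in k.
have yG : f (eg k) \in Ggroup lam by rewrite -{2}imf mem_morphim.
set y := f (eg k) in D yG.
have ya : (y ^+ (2 ^ a)%N)%g = 1%g.
  have P1 : (eg k ^+ (2 ^ a)%N)%g = 1%g.
    apply: pow_one => r.
    rewrite mxE; case: ifP => _; last exact: ord0_dvd.
    by rewrite ordek.
  by rewrite /y -morphX // P1 morph1.
have yl l : #[y ord0 l]%g %| 2 ^ a.
  by rewrite order_dvdn zmodXgE zmod1gE -entry_pow ya entry_one.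
pose w : A := (\row_l (if (a < lam l)%N then (((y ord0 l : nat) %/ 2)%:R : Z) else 0))%R.
have w2 l : a < lam l -> ((((y ord0 l : nat) %/ 2)%:R : Z) *+ 2)%R = y ord0 l.
  move=> al; apply: ord_inj.
  have ev : 2 %| (y ord0 l : nat).
    have := yl l; rewrite ordE // => /(dvdn_trans _); apply.
    rewrite -{1}(expn1 2) dvdn_Pexp2l //; have := lam_le l; lia.
  rewrite valMn // val_Zp_nat ?N_gt1 // (@modn_small (_ %/ 2)); last first.
    apply: leq_ltn_trans (val_lt HM (y ord0 l)); exact: leq_div.
  by rewrite divnK // modn_small // val_lt.
have wG : w \in Ggroup lam.
  rewrite inG; apply/forallP => l; rewrite mxE.
  case: ifP => al; last exact: ord0_dvd.
  apply: (@dvdn_trans (2 ^ a.+1)); last by rewrite dvdn_Pexp2l.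
  rewrite order_dvdn zmodXgE expnS mulrnA w2 // -zmodXgE zmod1gE -order_dvdn.
  exact: yl.
have wz : (w ^+ (2 ^ a)%N)%g = (y ^+ (2 ^ a.-1)%N)%g.
  apply/rowP => l; rewrite !entry_pow mxE.
  case: ifP => al.
    by rewrite -(prednK a1) expnS mulrnA w2.
  rewrite mul0rn; apply/esym/eqP; rewrite -zmod1gE -zmodXgE -order_dvdn.
  case: (eqVneq l k) => [-> // | lk].
  apply: dvdn_trans (_ : 2 ^ lam l %| _).
    by move: yG; rewrite inG => /forallP.
  rewrite dvdn_Pexp2l //.
  have : lam l <> a by move=> E; move: lk; rewrite (Uk _ E) eqxx.
  move: al => /negbT; lia.
have : w \in (f @* Ggroup lam)%g by rewrite imf.
case/morphimP => u uG _ wu.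
have E : (u ^+ (2 ^ a)%N)%g = (eg k ^+ (2 ^ a.-1)%N)%g.
  apply: (injmP injf); rewrite ?groupX //.
  by rewrite !morphX // -wu wz.
have : ((u ^+ (2 ^ a)%N)%g) ord0 k = 0%R.
  rewrite entry_pow; apply/eqP; rewrite -zmod1gE -zmodXgE -order_dvdn.
  by move: uG; rewrite inG => /forallP.
rewrite E entry_pow mxE eqxx => /eqP.
rewrite -zmod1gE -zmodXgE -order_dvdn ordek; last by lia.
lia.
Qed.

Lemma ord_absorb (x w : Z) s : #[w]%g %| 2 ^ s ->
  (#[(x + w)%R]%g %| 2 ^ s) = (#[x]%g %| 2 ^ s).
Proof.
rewrite !order_dvdn !zmodXgE zmod1gE mulrnDl => /eqP ->.
by rewrite addr0.
Qed.

Lemma par (x y : Z) s : s < M -> #[x]%g %| 2 ^ s.+1 -> #[y]%g %| 2 ^ s.+1 ->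
  (#[(x + y)%R]%g %| 2 ^ s) = ((#[x]%g %| 2 ^ s) == (#[y]%g %| 2 ^ s)).
Proof.
move=> sM; have HM : 0 < M by lia.
rewrite !ordE //; last by lia.
have -> : M - s = (M - s.+1).+1 by lia.
set u := M - s.+1.
move=> Hx Hy; rewrite valD //.
have -> : (2 ^ u.+1 %| (x + y) %% 2 ^ M) = (2 ^ u.+1 %| x + y).
  by rewrite /dvdn modn_dvdm // dvdn_Pexp2l //; lia.
rewrite -(divnK Hx) -(divnK Hy) -mulnDl !expnSr.
rewrite [(2 ^ u * 2)%N]mulnC !dvdn_pmul2r ?expn_gt0 // !dvdn2 oddD.
by case: (odd _); case: (odd _).
all: lia.
Qed.

Lemma eg_pow k : (eg k ^+ (2 ^ lam k)%N)%g = 1%g.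
Proof.
apply: pow_one => r; rewrite mxE; case: ifP => _; last exact: ord0_dvd.
by rewrite ordek ?lam_le.
Qed.

Lemma fe_ord (f : {morphism Ggroup lam >-> A}) k l :
  #[f (eg k) ord0 l]%g %| 2 ^ lam k.
Proof.
rewrite order_dvdn zmodXgE zmod1gE -entry_pow -morphX ?eg_in //.
by rewrite eg_pow morph1 entry_one.
Qed.

Section Bad.
Variables i j : 'I_n.
Hypotheses (ij : i < j) (gap : lam i + 2 <= lam j)
  (Ui : forall k, lam k = lam i -> k = i) (Uj : forall k, lam k = lam j -> k = j).

Let a := lam i.
Let d := lam j - lam i.

Lemma ij_neq : i != j.
Proof. by rewrite neq_ltn ij. Qed.

Definition x0 : A := (eg i * eg j ^+ (2 ^ d.-1)%N)%g.

Definition Kset : {set A} := [set g in Ggroup lam |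
  (#[g ord0 j]%g %| 2 ^ a.+1) && ((#[g ord0 i]%g %| 2 ^ a.-1) == (#[g ord0 j]%g %| 2 ^ a))].

Lemma aM : a.+2 <= M.
Proof. have := lam_le j; rewrite /a; move: gap; clear; lia. Qed.

Lemma a_pos : 0 < a.
Proof. exact: lam_pos. Qed.

Lemma L1 : (d.-1 + a.+1 = lam j)%N.
Proof. rewrite /a /d; move: gap (lam_pos i); clear; lia. Qed.
Lemma L2 : a <= d.-1 + a.-1.
Proof. rewrite /a /d; move: gap (lam_pos i); clear; lia. Qed.
Lemma L3 : (d.-1 + a = (lam j).-1)%N.
Proof. rewrite /a /d; move: gap (lam_pos i); clear; lia. Qed.

Lemma K_group : group_set Kset.
Proof.
apply/group_setP; split.
  apply/setIdP; split; first exact: group1.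
  by rewrite !entry_one !ord0_dvd.
move=> g h /setIdP [gG /andP [gj gx]] /setIdP [hG /andP [hj hx]].
apply/setIdP; split; first exact: groupM.
rewrite !entry_mul ord_addn; last 2 first; [exact: gj | exact: hj | rewrite andTb].
have aM := aM; have a1 := a_pos.
have gi : #[g ord0 i]%g %| 2 ^ (a.-1).+1.
  by rewrite prednK //; move: gG; rewrite inG => /forallP.
have hi : #[h ord0 i]%g %| 2 ^ (a.-1).+1.
  by rewrite prednK //; move: hG; rewrite inG => /forallP.
have s2 : a < M by apply: ltnW.
have s1 : a.-1 < M by apply: leq_ltn_trans (leq_pred a) s2.
rewrite (par s1 gi hi) (par s2 gj hj).
move: gx hx.
by case: (_ %| 2 ^ a.-1); case: (_ %| 2 ^ a.-1); case: (_ %| 2 ^ a); case: (_ %| 2 ^ a).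
Qed.

Canonical Kg := Group K_group.

Lemma eg_notin : eg i \notin Kset.
Proof.
apply/negP => /setIdP [_ /andP [_]].
have aM' : a.-1 <= M by have := aM; rewrite /a; clear; lia.
rewrite !mxE eqxx (negbTE (_ : j != i)) ?ord0_dvd ?(ordek _ aM') /a; last by rewrite eq_sym ij_neq.
by move/eqP; move: (lam_pos i); clear; lia.
Qed.

Lemma fx0_in (f : {morphism Ggroup lam >-> A}) :
  ('injm f)%g -> (f @* Ggroup lam)%g = Ggroup lam -> f x0 \in Kset.
Proof.
move=> injf imf.
have aM := aM; have a1 := a_pos.
rewrite /x0 morphM ?groupX ?eg_in // morphX ?eg_in //.
have yG : f (eg i) \in Ggroup lam by rewrite -{2}imf mem_morphim ?eg_in.
have zG : f (eg j) \in Ggroup lam by rewrite -{2}imf mem_morphim ?eg_in.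
have Dy := diag_unit Ui injf imf.
have Dz := diag_unit Uj injf imf.
have zj : #[f (eg j) ord0 j]%g %| 2 ^ lam j by move: zG; rewrite inG => /forallP.
rewrite inE groupM ?groupX //= !entry_mul !entry_pow.
rewrite ord_addn; last 2 first.
- apply: dvdn_trans (fe_ord f i j) _; rewrite dvdn_Pexp2l //.
- by rewrite ordMn L1.
rewrite ord_absorb; last first.
  have zi : #[f (eg j) ord0 i]%g %| 2 ^ a by move: zG; rewrite inG => /forallP.
  rewrite ordMn; apply: dvdn_trans zi _.
  by rewrite dvdn_Pexp2l // L2.
rewrite addrC ord_absorb; last exact: fe_ord.
rewrite ordMn (negbTE Dy).
by rewrite L3 (negbTE Dz).
Qed.

Definition X := [set p x0 | p : {perm A} in Aut (Ggroup lam)].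

Lemma x0_in : x0 \in Ggroup lam.
Proof. by rewrite groupM ?groupX ?eg_in. Qed.

Lemma XG : X \subset Ggroup lam.
Proof.
apply/subsetP => y /imsetP [p pA ->]. apply: (Aut_closed pA). exact: x0_in.
Qed.

Lemma XK : X \subset Kset.
Proof.
apply/subsetP => y /imsetP [p pA ->].
by rewrite -(autmE pA); apply: fx0_in; [exact: injm_autm | exact: im_autm].
Qed.

Lemma bad_exists : exists H : {group A},
  (H \char Ggroup lam)%g /\ ~ regular (H : {set A}).
Proof.
exists <<X>>%G; split.
  apply/charP; split; first by rewrite gen_subG XG.
  move=> f injf imf; apply/eqP; rewrite eqEcard card_injm ?gen_subG ?XG // leqnn andbT.
  rewrite morphim_gen ?XG // gen_subG; apply/subsetP => y /morphimP [x _ xX ->].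
  case/imsetP: xX => p pA ->.
  have -> : f (p x0) = (p * aut injf imf)%g x0 by rewrite permM autE // Aut_closed // x0_in.
  by apply: mem_gen; apply/imsetP; exists (p * aut injf imf)%g; rewrite // groupM // Aut_aut.
case=> c [cl E].
have x0H : x0 \in <<X>>%G.
  by apply: mem_gen; apply/imsetP; exists 1%g; rewrite ?group1 ?perm1.
have : eg i \in <<X>>%G.
  rewrite /= E inRset //; apply/forallP => k.
  move: x0H; rewrite /= E inRset // => /forallP /(_ k).
  rewrite /x0 entry_mul entry_pow !mxE.
  case: (eqVneq k i) => [-> | ki].
    by rewrite (negbTE ij_neq) mul0rn addr0.
  by move=> _; exact: ord0_dvd.
have sK : (<<X>> \subset Kg)%g by rewrite gen_subG XK.
by move=> /(subsetP sK) H; move: eg_notin; rewrite H.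
Qed.

End Bad.

End Main.

Theorem mainTheorem12 (n : nat) (lam : 'I_n -> nat)
  (lam_pos : forall i, 0 < lam i)
  (lam_sorted : forall i j : 'I_n, i <= j -> lam i <= lam j) :
  (exists H : {group amb lam}, (H \char Ggroup lam)%g /\ ~ regular (H : {set amb lam}))
  <->
  (exists i j : 'I_n, [/\ i < j, lam i + 2 <= lam j,
       (forall k : 'I_n, lam k = lam i -> k = i) &
       (forall k : 'I_n, lam k = lam j -> k = j)]).
Proof.
split.
  case=> H [Hc Hr]; apply: NNPP => nb; apply: Hr.
  exact: (nobad_regular lam_pos lam_sorted nb Hc).
case=> i [j [ij gap Ui Uj]].
exact: (bad_exists lam_pos ij gap Ui Uj).
Qed.
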